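(* Let $\alpha,\beta<1$ be real numbers (not necessarily positive). Let $A,B\subset\mathbb{N}$ be such that $A(X)\le C\frac{\sqrt{X}}{(\log X)^{\alpha}}$ and $B(X)\le C\frac{\sqrt{X}}{(\log X)^{\beta}}$ for some constant $C>0$ and all sufficiently large $X$. Then there is a constant $C'>0$ such that for all sufficiently large $X$, $$(AB)(X)\le \sum_{\substack{a\in A,\ b\in B\\ ab\le X}}1\le C'\sqrt{X}(\log X)^{1-\alpha-\beta}.$$
   Context: $\mathbb{N}$ is the set of positive integers; $AB=\{ab:a\in A,b\in B\}$; for $S\subset\mathbb{N}_0$, $S(X)=|S\cap[1,X]|$. *)

(* Defs.v *)
From Stdlib Require Import Reals Lra Lia List Arith Bool.
Open Scope bool_scope.
Open Scope R_scope.

(* Subsets of N_0 are represented by boolean predicates on nat. *)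

(* floor of a real number, as a nat (0 for negative inputs) *)
Definition fl (X : R) : nat := Z.to_nat (Int_part X).

Definition cnt (S : nat -> bool) (N : nat) : nat :=
  length (filter S (seq 1 N)).

Definition cntR (S : nat -> bool) (X : R) : nat := cnt S (fl X).

(* membership in the product set AB = {ab : a ∈ A, b ∈ B}, for m ≥ 1;
   for m ≥ 1 any factorisation m = a*b has 1 <= a, b <= m. *)
Definition prodset (A B : nat -> bool) (m : nat) : bool :=
  existsb (fun a => existsb (fun b => A a && B b && Nat.eqb (a * b) m)
                            (seq 1 m)) (seq 1 m).

Definition pairs (A B : nat -> bool) (N : nat) : nat :=
  length (filter (fun p => A (fst p) && B (snd p) && Nat.leb (fst p * snd p) N)
                 (list_prod (seq 1 N) (seq 1 N))).

Definition pairsR (A B : nat -> bool) (X : R) : nat := pairs A B (fl X).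

(* Main.v *)
Require Import Defs.
From Stdlib Require Import Reals Lra Lia List Arith Bool ZArith.
Open Scope R_scope.

Lemma exp_le' x y : x <= y -> exp x <= exp y.
Proof. intros [H|H]; [left; apply exp_increasing; auto| subst; lra]. Qed.

Lemma ln_le' x y : 0 < x -> x <= y -> ln x <= ln y.
Proof. intros Hx [H|H]; [left; apply ln_increasing; auto| subst; lra]. Qed.

Lemma Rpower_pos x c : 0 < Rpower x c.
Proof. unfold Rpower. apply exp_pos. Qed.

Lemma Rpower_base1 c : Rpower 1 c = 1.
Proof. unfold Rpower. rewrite ln_1, Rmult_0_r. apply exp_0. Qed.

Lemma ln_le_sub1 x : 0 < x -> ln x <= x - 1.
Proof. intros Hx. pose proof (exp_ineq1_le (ln x)). rewrite exp_ln in H; lra. Qed.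

Lemma Rpower_compare x y c : 0 < x -> 0 < y -> x <= 2 * y -> y <= 2 * x ->
  Rpower x c <= Rpower 2 (Rabs c) * Rpower y c.
Proof.
  intros Hx Hy H1 H2. unfold Rpower. rewrite <- exp_plus. apply exp_le'.
  assert (E1 : ln x <= ln 2 + ln y) by (rewrite <- ln_mult by lra; apply ln_le'; lra).
  assert (E2 : ln y <= ln 2 + ln x) by (rewrite <- ln_mult by lra; apply ln_le'; lra).
  destruct (Rle_dec 0 c).
  - rewrite Rabs_right by lra. nra.
  - rewrite Rabs_left by lra. nra.
Qed.

Fixpoint Rsum (f : nat -> R) (l : list nat) : R :=
  match l with nil => 0 | x :: l => f x + Rsum f l end.

Lemma Rsum_app f l1 l2 : Rsum f (l1 ++ l2) = Rsum f l1 + Rsum f l2.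
Proof. induction l1; simpl; [lra| rewrite IHl1; lra]. Qed.

Lemma Rsum_le f g l : (forall x, In x l -> f x <= g x) -> Rsum f l <= Rsum g l.
Proof.
  induction l as [|x l IH]; simpl; intros H; [lra|].
  pose proof (H x (or_introl eq_refl)). pose proof (IH (fun y Hy => H y (or_intror Hy))). lra.
Qed.

Lemma Rsum_scal c f l : Rsum (fun x => c * f x) l = c * Rsum f l.
Proof. induction l; simpl; [lra| rewrite IHl; lra]. Qed.

Lemma Rsum_plus f g l : Rsum (fun x => f x + g x) l = Rsum f l + Rsum g l.
Proof. induction l; simpl; [lra| rewrite IHl; lra]. Qed.

Lemma Rsum_ext f g l : (forall x, In x l -> f x = g x) -> Rsum f l = Rsum g l.
Proof.
  induction l as [|x l IH]; simpl; intros H; [lra|].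
  rewrite (H x (or_introl eq_refl)), (IH (fun y Hy => H y (or_intror Hy))). lra.
Qed.

Lemma INR_list_sum (f : nat -> nat) l : INR (list_sum (map f l)) = Rsum (fun x => INR (f x)) l.
Proof. induction l; simpl; [reflexivity| rewrite plus_INR, IHl; lra]. Qed.

Lemma Rsum_shift f l : Rsum f (map S l) = Rsum (fun j => f (S j)) l.
Proof. induction l; simpl; [lra| rewrite IHl; lra]. Qed.

Lemma Rsum_rev h M : Rsum (fun j => h (M - j)%nat) (seq 0 M) = Rsum (fun j => h (S j)) (seq 0 M).
Proof.
  induction M as [|M IH]; [reflexivity|].
  rewrite <- cons_seq, <- seq_shift. simpl Rsum at 1. rewrite Rsum_shift.
  simpl (S M - 0)%nat.
  rewrite IH. rewrite seq_shift, cons_seq, seq_S, Rsum_app. simpl. lra.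
Qed.

Lemma step_ineq s m : 0 < s -> 1 <= m ->
  Rpower (m + 1) (s - 1) <= (1 + s) / s * (Rpower (m + 1) s - Rpower m s).
Proof.
  intros Hs Hm. set (n := m + 1). set (P := Rpower n s).
  assert (Hn : 2 <= n) by (unfold n; lra).
  assert (HP : 0 < P) by apply Rpower_pos.
  assert (E1 : Rpower n (s - 1) = P / n).
  { unfold Rminus. rewrite Rpower_plus, Rpower_Ropp, Rpower_1 by lra. reflexivity. }
  set (e := exp (- (s / n))).
  assert (He : 0 < e) by apply exp_pos.
  assert (E2 : Rpower m s <= P * e).
  { unfold P, e, Rpower. rewrite <- exp_plus. apply exp_le'.
    assert (ln m <= ln n - 1 / n).
    { pose proof (ln_le_sub1 (m / n) ltac:(apply Rdiv_lt_0_compat; lra)).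
      unfold Rdiv in H. rewrite ln_mult, ln_Rinv in H by (try apply Rinv_0_lt_compat; lra).
      replace (m * / n - 1) with (- (1/n)) in H by (unfold n; field; lra). lra. }
    replace (s * ln n + - (s / n)) with (s * (ln n - 1 / n)) by (field; lra).
    apply Rmult_le_compat_l; lra. }
  assert (E3 : e * (1 + s / n) <= 1).
  { unfold e. rewrite exp_Ropp. pose proof (exp_ineq1_le (s / n)).
    pose proof (exp_pos (s/n)).
    apply (Rmult_le_reg_l (exp (s/n))); auto. rewrite <- Rmult_assoc, Rinv_r by lra. lra. }
  rewrite E1.
  assert (Hsn : 0 < s / n) by (apply Rdiv_lt_0_compat; lra).
  assert (P - Rpower m s >= P * (1 - e)) by nra.
  assert (1 - e >= (s / n) / (1 + s / n)).
  { apply Rle_ge. apply (Rmult_le_reg_r (1 + s/n)); [lra|].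
    unfold Rdiv at 1. rewrite Rmult_assoc, Rinv_l by lra. nra. }
  apply Rle_trans with ((1 + s) / s * (P * ((s / n) / (1 + s / n)))).
  - replace ((1 + s) / s * (P * (s / n / (1 + s / n)))) with (P * ((1 + s) / (n + s)))
      by (field; lra).
    unfold Rdiv. apply Rmult_le_compat_l; [lra|].
    apply (Rmult_le_reg_r (n * (n + s))); [nra|].
    rewrite Rmult_assoc, <- (Rmult_assoc (/ (n+s))), (Rmult_comm (/ (n+s))), Rmult_assoc, Rinv_l by lra.
    rewrite <- Rmult_assoc, Rinv_l by lra. nra.
  - apply Rmult_le_compat_l. apply Rlt_le, Rdiv_lt_0_compat; lra.
    assert (0 <= s / n / (1 + s / n)) by (apply Rlt_le, Rdiv_lt_0_compat; lra). nra.
Qed.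

Lemma sum_pow_bound s M : 0 < s -> (1 <= M)%nat ->
  Rsum (fun j => Rpower (INR (S j)) (s - 1)) (seq 0 M) <= (1 + s) / s * Rpower (INR M) s.
Proof.
  intros Hs HM. induction M as [|M IH]; [lia|].
  destruct (Nat.eq_dec M 0) as [->|HM0].
  - simpl. rewrite Rpower_base1, Rpower_base1.
    replace ((1 + s) / s * 1) with (1 + 1 / s) by (field; lra).
    assert (0 < 1 / s) by (apply Rdiv_lt_0_compat; lra). lra.
  - rewrite seq_S, Rsum_app. cbn [Rsum Nat.add]. specialize (IH ltac:(lia)).
    pose proof (step_ineq s (INR M) Hs ltac:(apply (le_INR 1); lia)).
    rewrite <- S_INR in H. lra.
Qed.

Lemma INR_le2 x y : (x <= 2 * y)%nat -> INR x <= 2 * INR y.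
Proof. intros H. apply le_INR in H. rewrite mult_INR in H. simpl in H. lra. Qed.

Lemma conv_bound a b M : a < 1 -> b < 1 -> (1 <= M)%nat ->
  Rsum (fun j => Rpower (INR (S j)) (-a) * Rpower (INR (M - j)) (-b)) (seq 0 M) <=
  (Rpower 2 (Rabs b) * ((1 + (1 - a)) / (1 - a)) + Rpower 2 (Rabs a) * ((1 + (1 - b)) / (1 - b)))
  * Rpower (INR M) (1 - a - b).
Proof.
  intros Ha Hb HM.
  assert (HMr : 1 <= INR M) by (apply (le_INR 1); lia).
  set (Da := Rpower 2 (Rabs a)). set (Db := Rpower 2 (Rabs b)).
  apply Rle_trans with (Rsum (fun j => Db * Rpower (INR M) (-b) * Rpower (INR (S j)) (-a)
                 + Da * Rpower (INR M) (-a) * Rpower (INR (M - j)) (-b)) (seq 0 M)).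
  { apply Rsum_le. intros j Hj. apply in_seq in Hj.
    pose proof (Rpower_pos (INR (S j)) (-a)). pose proof (Rpower_pos (INR (M - j)) (-b)).
    pose proof (Rpower_pos (INR M) (-a)). pose proof (Rpower_pos (INR M) (-b)).
    assert (0 < Da) by apply Rpower_pos. assert (0 < Db) by apply Rpower_pos.
    destruct (le_lt_dec (2 * S j) (M + 1)) as [Hc|Hc].
    - assert (Rpower (INR (M - j)) (-b) <= Db * Rpower (INR M) (-b)).
      { unfold Db. rewrite <- (Rabs_Ropp b). apply Rpower_compare.
        - apply (lt_INR 0); lia.
        - lra.
        - apply INR_le2. lia.
        - apply INR_le2. lia. }
      pose proof (Rmult_le_compat_l _ _ _ (Rlt_le _ _ H) H5).
      pose proof (Rmult_lt_0_compat _ _ (Rmult_lt_0_compat _ _ H3 H1) H0). lra.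
    - assert (Rpower (INR (S j)) (-a) <= Da * Rpower (INR M) (-a)).
      { unfold Da. rewrite <- (Rabs_Ropp a). apply Rpower_compare.
        - apply (lt_INR 0); lia.
        - lra.
        - apply INR_le2. lia.
        - apply INR_le2. lia. }
      pose proof (Rmult_le_compat_r _ _ _ (Rlt_le _ _ H0) H5).
      pose proof (Rmult_lt_0_compat _ _ (Rmult_lt_0_compat _ _ H4 H2) H). lra. }
  rewrite Rsum_plus, Rsum_scal, Rsum_scal.
  rewrite (Rsum_rev (fun n => Rpower (INR n) (-b))).
  rewrite (Rsum_ext (fun j => Rpower (INR (S j)) (-a)) (fun j => Rpower (INR (S j)) ((1 - a) - 1)))
    by (intros; f_equal; ring).
  rewrite (Rsum_ext (fun j => Rpower (INR (S j)) (-b)) (fun j => Rpower (INR (S j)) ((1 - b) - 1)))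
    by (intros; f_equal; ring).
  pose proof (sum_pow_bound (1 - a) M ltac:(lra) HM).
  pose proof (sum_pow_bound (1 - b) M ltac:(lra) HM).
  assert (E1 : Rpower (INR M) (-b) * Rpower (INR M) (1 - a) = Rpower (INR M) (1 - a - b))
    by (rewrite <- Rpower_plus; f_equal; ring).
  assert (E2 : Rpower (INR M) (-a) * Rpower (INR M) (1 - b) = Rpower (INR M) (1 - a - b))
    by (rewrite <- Rpower_plus; f_equal; ring).
  assert (0 < Da) by apply Rpower_pos. assert (0 < Db) by apply Rpower_pos.
  pose proof (Rpower_pos (INR M) (-a)). pose proof (Rpower_pos (INR M) (-b)).
  set (Sa := Rsum _ _) in *. set (Sb := Rsum (fun j => Rpower (INR (S j)) (1 - b - 1)) _) in *.
  apply Rle_trans with (Db * Rpower (INR M) (-b) * ((1 + (1 - a)) / (1 - a) * Rpower (INR M) (1 - a))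
     + Da * Rpower (INR M) (-a) * ((1 + (1 - b)) / (1 - b) * Rpower (INR M) (1 - b))).
  - apply Rplus_le_compat; apply Rmult_le_compat_l; try assumption; nra.
  - rewrite Rmult_plus_distr_r. rewrite <- E1 at 1. rewrite <- E2. right; ring.
Qed.

Lemma lt_pow2 i : (i < 2 ^ i)%nat.
Proof. induction i; simpl; lia. Qed.

Lemma ln2_pos : 0 < ln 2.
Proof. rewrite <- ln_1. apply ln_increasing; lra. Qed.

Lemma hyp_dyadic_gen a C (cS : nat -> nat) :
  0 < C ->
  (forall i, (cS i <= 2 ^ i)%nat) ->
  (exists X0, forall i, X0 <= INR (2 ^ i) ->
     INR (cS i) <= C * sqrt (INR (2 ^ i)) / Rpower (ln (INR (2 ^ i))) a) ->
  exists K, 0 < K /\ forall i, (1 <= i)%nat ->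
     INR (cS i) <= K * sqrt (INR (2 ^ i)) * Rpower (INR i) (-a).
Proof.
  intros HC Hle [X0 H].
  destruct (INR_archimed 1 X0 ltac:(lra)) as [i0 Hi0]. rewrite Rmult_1_r in Hi0.
  set (K1 := C * Rpower (ln 2) (-a)).
  set (K2 := INR (2 ^ i0) * exp (Rabs a * ln (INR i0))).
  assert (HK1 : 0 < K1) by (unfold K1; pose proof (Rpower_pos (ln 2) (-a)); nra).
  assert (HK2 : 0 <= K2).
  { unfold K2. pose proof (exp_pos (Rabs a * ln (INR i0))). pose proof (pos_INR (2^i0)). nra. }
  exists (K1 + K2). split; [lra|]. intros i Hi.
  pose proof (sqrt_pos (INR (2 ^ i))) as Hsq.
  pose proof (Rpower_pos (INR i) (-a)) as Hrp.
  assert (Hi1 : 1 <= INR i) by (apply (le_INR 1); lia).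
  destruct (le_lt_dec i0 i) as [Hc|Hc].
  - assert (HX : X0 <= INR (2 ^ i)).
    { pose proof (lt_pow2 i). apply lt_INR in H0. apply le_INR in Hc. lra. }
    specialize (H i HX).
    assert (Eln : ln (INR (2 ^ i)) = INR i * ln 2).
    { rewrite pow_INR, ln_pow; [reflexivity| simpl; lra]. }
    rewrite Eln, <- Rpower_mult_distr in H by (try apply ln2_pos; lra).
    apply Rle_trans with (K1 * sqrt (INR (2 ^ i)) * Rpower (INR i) (- a)).
    + eapply Rle_trans; [exact H|]. unfold K1. rewrite !Rpower_Ropp.
      right. field. split; apply Rgt_not_eq, Rpower_pos.
    + apply Rmult_le_compat_r; [lra|]. apply Rmult_le_compat_r; lra.
  - apply Rle_trans with (K2 * sqrt (INR (2 ^ i)) * Rpower (INR i) (- a)).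
    + assert (Hs1 : 1 <= sqrt (INR (2 ^ i))).
      { rewrite <- sqrt_1. apply sqrt_le_1_alt. apply (le_INR 1).
        pose proof (lt_pow2 i). lia. }
      assert (Hr : exp (- (Rabs a * ln (INR i0))) <= Rpower (INR i) (-a)).
      { unfold Rpower. apply exp_le'.
        assert (0 <= ln (INR i)) by (rewrite <- ln_1; apply ln_le'; lra).
        assert (ln (INR i) <= ln (INR i0)) by (apply ln_le'; [lra| apply le_INR; lia]).
        destruct (Rle_dec 0 a).
        - rewrite Rabs_right by lra. nra.
        - rewrite Rabs_left by lra. nra. }
      assert (Hc2 : INR (cS i) <= INR (2 ^ i0)).
      { apply le_INR. apply Nat.le_trans with (2 ^ i)%nat; auto.
        apply Nat.pow_le_mono_r; lia. }
      unfold K2. rewrite exp_Ropp in Hr.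
      pose proof (exp_pos (Rabs a * ln (INR i0))) as He.
      pose proof (pos_INR (2 ^ i0)).
      apply Rle_trans with (INR (2 ^ i0)); [exact Hc2|].
      apply Rle_trans with (INR (2 ^ i0) * exp (Rabs a * ln (INR i0)) * 1 * / exp (Rabs a * ln (INR i0))).
      * right. field. lra.
      * assert (0 < / exp (Rabs a * ln (INR i0))) by (apply Rinv_0_lt_compat; lra).
        apply Rmult_le_compat; try nra.
        apply Rmult_le_compat_l; nra.
    + apply Rmult_le_compat_r; [lra|]. apply Rmult_le_compat_r; lra.
Qed.

Lemma cnt_le (S : nat -> bool) n : (cnt S n <= n)%nat.
Proof. unfold cnt. rewrite <- (length_seq n 1) at 2. apply filter_length_le. Qed.

Lemma cnt_mono (S : nat -> bool) m n : (m <= n)%nat -> (cnt S m <= cnt S n)%nat.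
Proof.
  intros H. unfold cnt. replace n with (m + (n - m))%nat by lia.
  rewrite seq_app, filter_app, length_app. lia.
Qed.

Definition pick (A B : nat -> bool) (m : nat) : nat * nat :=
  hd (0%nat,0%nat) (filter (fun p => A (fst p) && B (snd p) && Nat.eqb (fst p * snd p) m)
     (list_prod (seq 1 m) (seq 1 m))).

Lemma hd_In {T} (d : T) (l : list T) x : In x l -> In (hd d l) l.
Proof. destruct l; simpl; [tauto| auto]. Qed.

Lemma pick_spec A B m : prodset A B m = true ->
  A (fst (pick A B m)) = true /\ B (snd (pick A B m)) = true /\
  (fst (pick A B m) * snd (pick A B m) = m)%nat /\
  (1 <= fst (pick A B m) <= m)%nat /\ (1 <= snd (pick A B m) <= m)%nat.
Proof.
  unfold prodset. intros H. apply existsb_exists in H as [a [Ha H]].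
  apply existsb_exists in H as [b [Hb H]].
  assert (Hin : In (a,b) (filter (fun p => A (fst p) && B (snd p) && Nat.eqb (fst p * snd p) m)
     (list_prod (seq 1 m) (seq 1 m)))).
  { apply filter_In. split; [apply in_prod; auto | exact H]. }
  pose proof (hd_In (0%nat,0%nat) _ _ Hin) as Hp. fold (pick A B m) in Hp.
  destruct (pick A B m) as [x y]. apply filter_In in Hp as [Hp1 Hp2].
  apply in_prod_iff in Hp1 as [Hx Hy]. apply in_seq in Hx, Hy.
  simpl in *. apply andb_prop in Hp2 as [Hp2 Hp3]. apply andb_prop in Hp2 as [Hp2 Hp4].
  apply Nat.eqb_eq in Hp3. repeat split; auto; lia.
Qed.

Lemma prod_le_pairs A B N : (cnt (prodset A B) N <= pairs A B N)%nat.
Proof.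
  unfold cnt, pairs.
  rewrite <- (length_map (pick A B)).
  apply NoDup_incl_length.
  - apply NoDup_map_NoDup_ForallPairs.
    + intros x y Hx Hy E. apply filter_In in Hx as [_ Hx]. apply filter_In in Hy as [_ Hy].
      destruct (pick_spec _ _ _ Hx) as (_&_&Ex&_). destruct (pick_spec _ _ _ Hy) as (_&_&Ey&_).
      rewrite E in Ex. lia.
    + apply NoDup_filter, seq_NoDup.
  - intros p Hp. apply in_map_iff in Hp as [m [<- Hm]].
    apply filter_In in Hm as [Hm1 Hm2]. apply in_seq in Hm1.
    destruct (pick_spec _ _ _ Hm2) as (H1&H2&H3&H4&H5).
    destruct (pick A B m) as [x y]. simpl in *.
    apply filter_In. split.
    + apply in_prod; apply in_seq; nia.
    + simpl. rewrite H1, H2. simpl. apply Nat.leb_le. lia.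
Qed.

Lemma filter_prod_len {T U} (P : T * U -> bool) l l' :
  length (filter P (list_prod l l')) =
  list_sum (map (fun a => length (filter (fun b => P (a,b)) l')) l).
Proof.
  induction l as [|a l IH]; simpl; auto.
  rewrite filter_app, length_app, IH, filter_map_swap, length_map. reflexivity.
Qed.

Lemma divmod_facts N a : (0 < a)%nat -> N = (a * (N / a) + N mod a)%nat /\ (N mod a < a)%nat.
Proof. intros Ha. split. apply Nat.div_mod; lia. apply Nat.mod_upper_bound; lia. Qed.

Lemma inner_eq (A B : nat -> bool) N a : (1 <= a)%nat ->
  length (filter (fun b => A a && B b && Nat.leb (a * b) N) (seq 1 N)) =
  if A a then cnt B (N / a) else 0%nat.
Proof.
  intros Ha. destruct (A a) eqn:EA; simpl.
  - destruct (divmod_facts N a ltac:(lia)) as [E1 E2].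
    assert (Hq : (N / a <= N)%nat) by nia.
    replace (seq 1 N) with (seq 1 (N / a) ++ seq (1 + N / a) (N - N / a))
      by (rewrite <- seq_app; f_equal; lia).
    rewrite filter_app, length_app.
    rewrite (filter_ext_in _ (fun b => false) (seq (1 + N / a) (N - N / a))).
    2:{ intros b Hb. apply in_seq in Hb. destruct (B b); simpl; auto.
        apply Nat.leb_gt. nia. }
    rewrite filter_false. simpl. rewrite Nat.add_0_r. unfold cnt.
    f_equal. apply filter_ext_in. intros b Hb. apply in_seq in Hb.
    destruct (B b); simpl; auto. apply Nat.leb_le. nia.
  - induction (seq 1 N); simpl; auto.
Qed.

Lemma pairs_eq A B N : pairs A B N =
  list_sum (map (fun a => if A a then cnt B (N / a) else 0%nat) (seq 1 N)).
Proof.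
  unfold pairs. rewrite filter_prod_len. f_equal. apply map_ext_in.
  intros a Ha. apply in_seq in Ha. simpl. apply inner_eq. lia.
Qed.

Lemma list_sum_le {T} (f g : T -> nat) l : (forall x, In x l -> (f x <= g x)%nat) ->
  (list_sum (map f l) <= list_sum (map g l))%nat.
Proof.
  induction l as [|x l IH]; simpl; intros H; auto.
  specialize (H x (or_introl eq_refl)) as Hx. assert (IH' := IH (fun y Hy => H y (or_intror Hy))). lia.
Qed.

Lemma dyadic_split (f : nat -> nat) K :
  list_sum (map f (seq 1 (2^K - 1))) =
  list_sum (map (fun j => list_sum (map f (seq (2^j) (2^j)))) (seq 0 K)).
Proof.
  induction K as [|K IH]; auto.
  pose proof (Nat.pow_nonzero 2 K ltac:(lia)) as HK.
  replace (2 ^ S K - 1)%nat with ((2^K - 1) + 2^K)%nat by (simpl; lia).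
  rewrite seq_app, map_app, list_sum_app, IH, seq_S, map_app, list_sum_app.
  replace (1 + (2^K - 1))%nat with (2^K)%nat by lia. simpl. idtac.
rewrite Nat.add_0_r; reflexivity. Qed.

Lemma sum_ind_const (A : nat -> bool) c l :
  list_sum (map (fun a => if A a then c else 0%nat) l) = (c * length (filter A l))%nat.
Proof. induction l as [|x l IH]; simpl; [lia|]. destruct (A x); simpl; rewrite IH; lia. Qed.

Lemma pairs_dyadic A B N : (1 <= N)%nat ->
  (pairs A B N <= list_sum (map (fun j => cnt A (2^(S j)) * cnt B (2^(S (Nat.log2 N) - j)))
                               (seq 0 (S (Nat.log2 N)))))%nat.
Proof.
  intros HN. set (L := Nat.log2 N). set (M := S L).
  destruct (Nat.log2_spec N ltac:(lia)) as [HL1 HL2]. fold L in HL1, HL2. fold M in HL2.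
  rewrite pairs_eq.
  set (g := fun a => if A a then cnt B (N / a) else 0%nat).
  apply Nat.le_trans with (list_sum (map g (seq 1 (2^M - 1)))).
  { replace (2^M - 1)%nat with (N + (2^M - 1 - N))%nat by lia.
    rewrite seq_app, map_app, list_sum_app. lia. }
  rewrite dyadic_split. apply list_sum_le. intros j Hj. apply in_seq in Hj.
  apply Nat.le_trans with (list_sum (map (fun a => if A a then cnt B (2^(M-j)) else 0%nat) (seq (2^j) (2^j)))).
  { apply list_sum_le. intros a Ha. apply in_seq in Ha. unfold g. destruct (A a); auto.
    apply cnt_mono.
    apply Nat.le_trans with (N / 2^j)%nat.
    - apply Nat.div_le_compat_l. split; [apply Nat.neq_0_lt_0, Nat.pow_nonzero; lia| lia].
    - apply Nat.lt_le_incl. apply Nat.Div0.div_lt_upper_bound.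
      rewrite <- Nat.pow_add_r. replace (j + (M - j))%nat with M by lia. exact HL2. }
  rewrite sum_ind_const. rewrite Nat.mul_comm. apply Nat.mul_le_mono_r.
  apply Nat.le_trans with (cnt A (2^j - 1 + 2^j)).
  - pose proof (Nat.pow_nonzero 2 j ltac:(lia)).
    unfold cnt. rewrite seq_app, filter_app, length_app.
    replace (1 + (2^j - 1))%nat with (2^j)%nat by lia. lia.
  - apply cnt_mono. simpl. lia.
Qed.

Lemma INR2 : INR 2 = 2.
Proof. simpl. lra. Qed.

Lemma fl_INR n : fl (INR n) = n.
Proof. unfold fl. rewrite Int_part_INR. apply Nat2Z.id. Qed.

Lemma fl_spec X : 0 <= X -> INR (fl X) <= X < INR (fl X) + 1.
Proof.
  intros HX. destruct (base_Int_part X) as [H1 H2].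
  assert (Hz : (0 <= Int_part X)%Z).
  { assert (-1 < IZR (Int_part X)) by lra. apply lt_IZR in H. lia. }
  unfold fl. rewrite INR_IZR_INZ, Z2Nat.id by exact Hz. lra.
Qed.

Lemma hyp_convert a C (S : nat -> bool) : 0 < C ->
  (exists X0, forall X, X0 <= X -> INR (cntR S X) <= C * sqrt X / Rpower (ln X) a) ->
  exists K, 0 < K /\ forall i, (1 <= i)%nat ->
     INR (cnt S (2 ^ i)) <= K * sqrt (INR (2 ^ i)) * Rpower (INR i) (-a).
Proof.
  intros HC [X0 H]. apply (hyp_dyadic_gen a C (fun i => cnt S (2 ^ i)) HC).
  - intros i. apply cnt_le.
  - exists X0. intros i Hi. specialize (H _ Hi). unfold cntR in H. rewrite fl_INR in H. exact H.
Qed.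

Theorem lemma2p1 (alpha beta C : R) (A B : nat -> bool) :
  alpha < 1 -> beta < 1 -> 0 < C ->
  A 0%nat = false -> B 0%nat = false ->
  (exists X0, forall X, X0 <= X ->
     INR (cntR A X) <= C * sqrt X / Rpower (ln X) alpha) ->
  (exists X0, forall X, X0 <= X ->
     INR (cntR B X) <= C * sqrt X / Rpower (ln X) beta) ->
  exists C', 0 < C' /\
    exists X0, forall X, X0 <= X ->
      INR (cntR (prodset A B) X) <= INR (pairsR A B X) /\
      INR (pairsR A B X) <= C' * sqrt X * Rpower (ln X) (1 - alpha - beta).
Proof.
  intros Ha Hb HC _ _ hA hB.
  destruct (hyp_convert alpha C A HC hA) as [KA [HKA hKA]].
  destruct (hyp_convert beta C B HC hB) as [KB [HKB hKB]].
  set (g := 1 - alpha - beta).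
  set (E := Rpower 2 (Rabs beta) * ((1 + (1 - alpha)) / (1 - alpha)) +
            Rpower 2 (Rabs alpha) * ((1 + (1 - beta)) / (1 - beta))).
  assert (HE : 0 < E).
  { unfold E. pose proof (Rpower_pos 2 (Rabs beta)). pose proof (Rpower_pos 2 (Rabs alpha)).
    assert (0 < (1 + (1 - alpha)) / (1 - alpha)) by (apply Rdiv_lt_0_compat; lra).
    assert (0 < (1 + (1 - beta)) / (1 - beta)) by (apply Rdiv_lt_0_compat; lra). nra. }
  set (D := Rpower 2 (Rabs g) * Rpower (/ ln 2) g).
  assert (HD : 0 < D) by (unfold D; pose proof (Rpower_pos 2 (Rabs g)); pose proof (Rpower_pos (/ ln 2) g); nra).
  exists (KA * KB * 2 * E * D). split.
  { assert (0 < KA * KB) by nra. assert (0 < KA * KB * 2) by nra. assert (0 < KA * KB * 2 * E) by nra. nra. }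
  exists 4. intros X HX. split.
  { unfold cntR, pairsR. apply le_INR. apply prod_le_pairs. }
  unfold pairsR. set (N := fl X).
  destruct (fl_spec X ltac:(lra)) as [HN1 HN2]. fold N in HN1, HN2.
  assert (HN4 : (4 <= N)%nat) by (apply INR_lt; simpl; lra).
  set (L := Nat.log2 N). set (M := S L).
  destruct (Nat.log2_spec N ltac:(lia)) as [HL1 HL2]. fold L in HL1, HL2. fold M in HL2.
  assert (HL : (1 <= L)%nat).
  { unfold L. rewrite <- (Nat.log2_pow2 1) by lia. apply Nat.log2_le_mono. simpl. lia. }
  pose proof (pairs_dyadic A B N ltac:(lia)) as Hp. fold L M in Hp.
  apply le_INR in Hp. rewrite INR_list_sum in Hp.
  set (T := fun j => Rpower (INR (S j)) (-alpha) * Rpower (INR (M - j)) (-beta)).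
  set (Q := sqrt (INR (2 ^ S M))).
  assert (HQ0 : 0 <= Q) by apply sqrt_pos.
  assert (Hs : Rsum (fun j => INR (cnt A (2 ^ S j) * cnt B (2 ^ (M - j)))) (seq 0 M)
               <= Rsum (fun j => KA * KB * Q * T j) (seq 0 M)).
  { apply Rsum_le. intros j Hj. apply in_seq in Hj. rewrite mult_INR.
    specialize (hKA (S j) ltac:(lia)). specialize (hKB (M - j)%nat ltac:(lia)).
    pose proof (pos_INR (cnt A (2 ^ S j))). pose proof (pos_INR (cnt B (2 ^ (M - j)))).
    apply Rle_trans with ((KA * sqrt (INR (2 ^ S j)) * Rpower (INR (S j)) (- alpha)) *
                          (KB * sqrt (INR (2 ^ (M - j))) * Rpower (INR (M - j)) (- beta))).
    - apply Rmult_le_compat; auto.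
    - right. unfold Q, T.
      replace (INR (2 ^ S M)) with (INR (2 ^ S j) * INR (2 ^ (M - j))).
      + rewrite sqrt_mult by apply pos_INR. ring.
      + rewrite <- mult_INR, <- Nat.pow_add_r. f_equal. f_equal. lia. }
  rewrite Rsum_scal in Hs.
  pose proof (conv_bound alpha beta M Ha Hb ltac:(lia)) as Hc. fold E g in Hc.
  change (Rsum (fun j => Rpower (INR (S j)) (- alpha) * Rpower (INR (M - j)) (- beta)) (seq 0 M))
    with (Rsum T (seq 0 M)) in Hc.
  assert (HQ : Q <= 2 * sqrt X).
  { unfold Q. replace (2 * sqrt X) with (sqrt (4 * X)).
    - apply sqrt_le_1_alt. rewrite pow_INR. unfold M. simpl pow.
      pose proof (le_INR _ _ HL1) as H'. rewrite pow_INR in H'. simpl INR in H'.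
      lra.
    - rewrite sqrt_mult by lra. replace 4 with (2 * 2) by lra. rewrite sqrt_square; lra. }
  assert (Hln2 := ln2_pos).
  assert (HlnX : 0 < ln X) by (rewrite <- ln_1; apply ln_increasing; lra).
  assert (Hy1 : INR L <= ln X / ln 2).
  { apply (Rmult_le_reg_r (ln 2)); auto. unfold Rdiv. rewrite Rmult_assoc, Rinv_l, Rmult_1_r by lra.
    rewrite <- ln_pow by lra. apply ln_le'. apply pow_lt; lra.
    apply le_INR in HL1. rewrite pow_INR in HL1. rewrite INR2 in HL1. lra. }
  assert (Hy2 : ln X / ln 2 <= INR M).
  { apply (Rmult_le_reg_r (ln 2)); auto. unfold Rdiv. rewrite Rmult_assoc, Rinv_l, Rmult_1_r by lra.
    rewrite <- ln_pow by lra. apply ln_le'. lra.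
    assert (HH : (N + 1 <= 2 ^ M)%nat) by lia.
    apply le_INR in HH. rewrite plus_INR, pow_INR, INR2 in HH. simpl (INR 1) in HH.
    lra. }
  assert (HLr : 1 <= INR L) by (apply (le_INR 1); lia).
  assert (HMr : INR M = INR L + 1) by (unfold M; rewrite S_INR; reflexivity).
  assert (HMg : Rpower (INR M) g <= D * Rpower (ln X) g).
  { eapply Rle_trans.
    - apply (Rpower_compare (INR M) (ln X / ln 2) g); try lra.
    - unfold D. unfold Rdiv. rewrite <- Rpower_mult_distr by (try apply Rinv_0_lt_compat; lra).
      right. ring. }
  pose proof (Rpower_pos (INR M) g). pose proof (Rpower_pos (ln X) g).
  assert (HT : 0 <= Rsum T (seq 0 M)).
  { apply Rle_trans with (Rsum (fun _ => 0) (seq 0 M)).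
    - clear. induction (seq 0 M); simpl; lra.
    - apply Rsum_le. intros. unfold T. pose proof (Rpower_pos (INR (S x)) (-alpha)).
      pose proof (Rpower_pos (INR (M - x)) (-beta)). nra. }
  apply Rle_trans with (KA * KB * Q * Rsum T (seq 0 M)); [lra|].
  assert (0 < KA * KB) by nra.
  apply Rle_trans with (KA * KB * (2 * sqrt X) * (E * (D * Rpower (ln X) g))).
  - assert (Rsum T (seq 0 M) <= E * (D * Rpower (ln X) g)).
    { apply Rle_trans with (E * Rpower (INR M) g); auto.
      apply Rmult_le_compat_l; lra. }
    apply Rmult_le_compat; nra.
  - right. ring.
Qed.
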